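(* For $d=3$ and $\lambda\ge 2/\sqrt3$, the only positive solution $z$ of the fixed-point equation $z=\phi_3(z,\lambda)$ is $$\mu_{3,\infty}(\lambda)=\frac{3\lambda^2+\lambda\sqrt{9\lambda^2-12}+4}{\sqrt{18\lambda^2+6\lambda\sqrt{9\lambda^2-12}}},$$ and the corresponding alignment $\alpha_{3,\infty}(\lambda)=\omega_3(\mu_{3,\infty}(\lambda),\lambda)$ equals $$\alpha_{3,\infty}(\lambda)=\sqrt{\frac12+\sqrt{\frac{3\lambda^2-4}{12\lambda^2}}}.$$
   Context: For $d=3$: $\beta_3=1/\sqrt{6}\cdot\sqrt{4}\,$ i.e. $\beta_3=2/\sqrt6$, and $m_3(z)=\frac{2}{\beta_3^2}\left(-z+z\sqrt{1-\beta_3^2/z^2}\right)=-3z+3\sqrt{z^2-2/3}$. The functions are $\omega_3(z,\lambda)=\frac1\lambda\left(z+\frac13 m_3(z/2)\right)=\frac1\lambda\left(\frac z2+\sqrt{\frac{z^2}{4}-\frac23}\right)$ and $\phi_3(z,\lambda)=\lambda\,\omega_3(z,\lambda)^3-\frac12 m_3(z/2)$. *)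

(* Defs.v *)
From mathcomp Require Import all_boot all_order all_algebra.
Set Implicit Arguments. Unset Strict Implicit. Unset Printing Implicit Defensive.
Import Order.TTheory GRing.Theory Num.Theory.
Local Open Scope ring_scope.

Definition m3 {R : rcfType} (z : R) : R := - (3 * z) + 3 * Num.sqrt (z ^+ 2 - 2 / 3).

Definition omega3 {R : rcfType} (z l : R) : R := l^-1 * (z + 3^-1 * m3 (z / 2)).

Definition phi3 {R : rcfType} (z l : R) : R := l * omega3 z l ^+ 3 - 2^-1 * m3 (z / 2).

Definition mu3 {R : rcfType} (l : R) : R :=
  (3 * l ^+ 2 + l * Num.sqrt (9 * l ^+ 2 - 12) + 4) /
  Num.sqrt (18 * l ^+ 2 + 6 * l * Num.sqrt (9 * l ^+ 2 - 12)).

Definition alpha3 {R : rcfType} (l : R) : R :=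
  Num.sqrt (2^-1 + Num.sqrt ((3 * l ^+ 2 - 4) / (12 * l ^+ 2))).

(* Main.v *)
Require Import Defs.
From mathcomp Require Import all_boot all_order all_algebra.
From mathcomp Require Import ring lra.
Import Order.TTheory GRing.Theory Num.Theory.
Local Open Scope ring_scope.

Lemma sqrt_eq (R : rcfType) (x y : R) : 0 <= y -> y ^+ 2 = x -> Num.sqrt x = y.
Proof. by move=> hy <-; rewrite sqrtr_sqr ger0_norm. Qed.

Theorem lemma1 (R : rcfType) (l : R) (hl : 2 / Num.sqrt 3 <= l) :
  [/\ 0 < mu3 l, 2 / 3 <= (mu3 l / 2) ^+ 2,
      (forall z : R, 0 < z -> 2 / 3 <= (z / 2) ^+ 2 ->
         (z = phi3 z l <-> z = mu3 l))
    & omega3 (mu3 l) l = alpha3 l].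
Proof.
set q := Num.sqrt (3 : R).
have hq0 : 0 < q by rewrite sqrtr_gt0; lra.
have hq2 : q ^+ 2 = 3 by rewrite sqr_sqrtr //; lra.
have hlq : 2 <= l * q by rewrite -ler_pdivrMr.
have hl0 : 0 < l by nra.
have hl2 : 4 <= 3 * l ^+ 2 by nra.
have hln : l != 0 by rewrite gt_eqF.
set r := Num.sqrt (9 * l ^+ 2 - 12 : R).
have hr0 : 0 <= r by exact: sqrtr_ge0.
have hr2 : r ^+ 2 = 9 * l ^+ 2 - 12 by rewrite sqr_sqrtr //; lra.
have hlr : 0 <= l * r by nra.
set T := (3 * l ^+ 2 + l * r) / 6.
have hT : 2 <= 3 * T by rewrite /T; lra.
set a := Num.sqrt T.
have ha2 : a ^+ 2 = T by rewrite sqr_sqrtr //; lra.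
have ha0 : 0 < a by rewrite sqrtr_gt0; lra.
have han : a != 0 by rewrite gt_eqF.
have hmu : mu3 l = a + 2 / (3 * a).
  rewrite /mu3 (@sqrt_eq _ (18 * l ^+ 2 + 6 * l * r) (6 * a)); first last.
  - by rewrite exprMn ha2 /T; field.
  - lra.
  have -> : 3 * l ^+ 2 + l * r + 4 = 6 * a ^+ 2 + 4 by rewrite ha2 /T; field.
  by field.
have omegaE : forall z, omega3 z l =
    (z / 2 + Num.sqrt ((z / 2) ^+ 2 - 2 / 3)) / l.
  by move=> z; rewrite /omega3 /m3; field.
have phiE : forall z, phi3 z l =
    (z / 2 + Num.sqrt ((z / 2) ^+ 2 - 2 / 3)) ^+ 3 / l ^+ 2
    + 3 * (z / 2 - Num.sqrt ((z / 2) ^+ 2 - 2 / 3)) / 2.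
  by move=> z; rewrite /phi3 omegaE /m3; field.
have hd : 0 <= a - 2 / (3 * a).
  have -> : a - 2 / (3 * a) = (3 * a ^+ 2 - 2) / (3 * a) by field.
  apply: divr_ge0; lra.
have hSmu : Num.sqrt (((a + 2 / (3 * a)) / 2) ^+ 2 - 2 / 3)
            = (a - 2 / (3 * a)) / 2.
  by apply: sqrt_eq; [lra | field].
have hmu0 : 0 < a + 2 / (3 * a).
  have : 0 < 2 / (3 * a) by apply: divr_gt0; lra.
  lra.
have hS0 : 2 / 3 <= (mu3 l / 2) ^+ 2.
  rewrite hmu.
  have -> : ((a + 2 / (3 * a)) / 2) ^+ 2 = ((a - 2 / (3 * a)) / 2) ^+ 2 + 2/3
    by field.
  have := sqr_ge0 ((a - 2 / (3 * a)) / 2); lra.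
have hkey : 3 * a ^+ 4 - 3 * l ^+ 2 * a ^+ 2 + l ^+ 2 = 0.
  have -> : a ^+ 4 = (a ^+ 2) ^+ 2 by rewrite -exprM.
  rewrite ha2 /T.
  have -> : 3 * ((3 * l ^+ 2 + l * r) / 6) ^+ 2 -
    3 * l ^+ 2 * ((3 * l ^+ 2 + l * r) / 6) + l ^+ 2
    = l ^+ 2 * (r ^+ 2 - (9 * l ^+ 2 - 12)) / 12 by field.
  by rewrite hr2 subrr mulr0 mul0r.
split; [by rewrite hmu | by [] | |].
- move=> z hz hw.
  set w := z / 2 in hw *.
  set S := Num.sqrt (w ^+ 2 - 2 / 3).
  have hS : 0 <= S by exact: sqrtr_ge0.
  have hS2 : S ^+ 2 = w ^+ 2 - 2 / 3 by rewrite sqr_sqrtr //; lra.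
  have hzw : z = 2 * w by rewrite /w; field.
  have hw0 : 0 < w by rewrite /w; lra.
  rewrite phiE -/w -/S; split => [H|Hz].
  + set b := w + S.
    have hb0 : 0 < b by rewrite /b; lra.
    have hbn : b != 0 by rewrite gt_eqF.
    have H1 : l ^+ 2 * (w + 3 * S) - 2 * b ^+ 3 = 0.
      have -> : l ^+ 2 * (w + 3 * S) - 2 * b ^+ 3 =
        (2 * l ^+ 2) * (2 * w - (b ^+ 3 / l ^+ 2 + 3 * (w - S) / 2))
        by rewrite /b; field.
      by rewrite -hzw -H subrr mulr0.
    have hD : S ^+ 2 - (w ^+ 2 - 2 / 3) = 0 by rewrite hS2 subrr.
    have P : 3 * b ^+ 4 - 3 * l ^+ 2 * b ^+ 2 + l ^+ 2 = 0.
      have -> : 3 * b ^+ 4 - 3 * l ^+ 2 * b ^+ 2 + l ^+ 2 =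
        - (3 / 2) * b * (l ^+ 2 * (w + 3 * S) - 2 * b ^+ 3)
        + (3 / 2) * l ^+ 2 * (S ^+ 2 - (w ^+ 2 - 2 / 3)) by rewrite /b; field.
      by rewrite H1 hD !mulr0 addr0.
    set T' := (3 * l ^+ 2 - l * r) / 6.
    have Q : (b ^+ 2 - T) * (b ^+ 2 - T') = 0.
      have -> : (b ^+ 2 - T) * (b ^+ 2 - T') =
        (3 * b ^+ 4 - 3 * l ^+ 2 * b ^+ 2 + l ^+ 2) / 3
        + l ^+ 2 * (9 * l ^+ 2 - 12 - r ^+ 2) / 36 by rewrite /T /T'; field.
      by rewrite P hr2 subrr mulr0 mul0r addr0 mul0r.
    have hb2 : 2 / 3 <= b ^+ 2 by rewrite /b; nra.
    have hbT : b ^+ 2 = T.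
      move/eqP: Q; rewrite mulf_eq0 => /orP [/eqP Q|/eqP Q].
        by apply/eqP; rewrite -subr_eq0; apply/eqP.
      have hT' : b ^+ 2 = T' by apply/eqP; rewrite -subr_eq0; apply/eqP.
      have hlr2 : l * r <= 3 * l ^+ 2 - 4 by move: hb2; rewrite hT' /T'; lra.
      have hsq : (l * r) ^+ 2 <= (3 * l ^+ 2 - 4) ^+ 2 by nra.
      have hr20 : r ^+ 2 = 0.
        move: hsq; rewrite exprMn hr2 => hsq.
        have hL : l ^+ 2 <= 4 / 3 by nra.
        lra.
      have hr : r = 0 by apply/eqP; move/eqP: hr20; rewrite expf_eq0.
      by rewrite hT' /T' /T hr mulr0 subr0 addr0.
    have hab : b = a by rewrite /a -hbT sqrtr_sqr ger0_norm //; lra.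
    rewrite hmu -hab.
    have hws : w - S = 2 / (3 * b).
      apply: (mulfI hbn).
      have -> : b * (2 / (3 * b)) = 2 / 3 by field.
      rewrite /b; move: hD; nra.
    rewrite hzw -hws /b; ring.
  + have hwmu : w = (a + 2 / (3 * a)) / 2 by rewrite /w Hz hmu.
    have hSmu' : S = (a - 2 / (3 * a)) / 2 by rewrite /S hwmu hSmu.
    rewrite hzw hSmu' hwmu.
    have hl2' : l ^+ 2 = 3 * a ^+ 4 / (3 * a ^+ 2 - 1).
      have hn : 3 * a ^+ 2 - 1 != 0 by apply/negP => /eqP; rewrite ha2; lra.
      apply: (mulIf hn); rewrite divfK //; last first.
      lra.
    have hn : 3 * a ^+ 2 - 1 != 0 by apply/negP => /eqP; rewrite ha2; lra.
    rewrite hl2'; field.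
    by rewrite han hn.
- rewrite omegaE hmu hSmu /alpha3.
  have -> : ((a + 2 / (3 * a)) / 2 + (a - 2 / (3 * a)) / 2) / l = a / l by field; rewrite ?han ?hln. 
  rewrite (@sqrt_eq _ ((3 * l ^+ 2 - 4) / (12 * l ^+ 2)) (r / (6 * l))); first last.
  + by rewrite exprMn hr2; field.
  + apply: divr_ge0; lra.
  symmetry; apply: sqrt_eq.
    apply: divr_ge0; lra.
  by rewrite exprMn ha2 /T; field.
Qed.
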